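(* If a digraph $H$ has tree duality, then its arc graph $\delta H$ also has tree duality.
   Context: Digraphs are finite, $G=(V,A)$ with $A\subseteq V\times V$; homomorphisms are arc-preserving vertex maps. A set $\mathcal F$ of digraphs is a complete set of obstructions for $H$ if for every digraph $G$: $G\to H$ iff no $F\in\mathcal F$ admits a homomorphism to $G$. $H$ has tree duality if it has a complete set of obstructions consisting of oriented trees (digraphs whose underlying undirected graph is a tree). The arc graph of $G=(V,A)$ is $\delta G=(A,\delta A)$ with $\delta A=\{((u,v),(v,w)) : (u,v),(v,w)\in A\}$. *)

(* Defs.v *)
From HB Require Import structures.
From mathcomp Require Import all_boot.
Set Implicit Arguments. Unset Strict Implicit. Unset Printing Implicit Defensive.

Record digraph := Digraph { dvert :> finType; darc : rel dvert }.
Arguments darc : clear implicits.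

Definition hom (G H : digraph) : Prop :=
  exists f : G -> H, forall u v : G, darc G u v -> darc H (f u) (f v).

Definition uadj (G : digraph) : rel G := fun u v => darc G u v || darc G v u.

Definition oriented_tree (T : digraph) : Prop :=
  [/\ 0 < #|T|,
      (forall u : T, ~~ darc T u u),
      (forall u v : T, darc T u v -> ~~ darc T v u),
      (forall u v : T, connect (uadj (G:=T)) u v)
    & (forall s : seq T, 3 <= size s -> uniq s -> ~~ cycle (uadj (G:=T)) s)].

Definition complete_obstructions (Fs : digraph -> Prop) (H : digraph) : Prop :=
  forall G : digraph, hom G H <-> ~ (exists F, Fs F /\ hom F G).

Definition tree_duality (H : digraph) : Prop :=
  exists Fs : digraph -> Prop,
    (forall F, Fs F -> oriented_tree F) /\ complete_obstructions Fs H.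

Definition arc_type (G : digraph) : finType :=
  {p : G * G | darc G p.1 p.2}.

Definition arc_graph (G : digraph) : digraph :=
  @Digraph (arc_type G) (fun a b => (val a).2 == (val b).1).

(* Main.v *)
Require Import Defs.
From mathcomp Require Import all_boot.
From Stdlib Require Import Classical ClassicalEpsilon.
Set Implicit Arguments. Unset Strict Implicit. Unset Printing Implicit Defensive.

Definition pset_type (H : digraph) : finType := {X : {set H} | X != set0}.

Definition PH (H : digraph) : digraph :=
  @Digraph (pset_type H) (fun X Y =>
    [forall a in val X, exists b in val Y, darc H a b] &&
    [forall b in val Y, exists a in val X, darc H a b]).

Lemma uadj_sym (T : digraph) : symmetric (uadj (G:=T)).
Proof. by move=> x y; rewrite /uadj orbC. Qed.

Lemma acyc (T : digraph) (rk : T -> nat) (par : T -> T) :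
  (forall x y, uadj x y -> (y = par x /\ rk y < rk x) \/ (x = par y /\ rk x < rk y)) ->
  forall s : seq T, 3 <= size s -> uniq s -> ~~ cycle (uadj (G:=T)) s.
Proof.
move=> Hr s Hs Hu; apply/negP => Hc.
case: s Hs Hu Hc => [//|x0 s0] Hs Hu Hc.
have Px0 : x0 \in x0 :: s0 by rewrite mem_head.
case: (arg_maxnP rk Px0) => x Hx Hmax.
case: (rot_to Hx) => i s' Hrot.
have Hu' : uniq (x :: s') by rewrite -Hrot rot_uniq.
have Hc' : cycle (uadj (G:=T)) (x :: s') by rewrite -Hrot rot_cycle.
have Hs' : 3 <= size (x :: s') by rewrite -Hrot size_rot.
have Hmem : forall y, y \in x :: s' -> y \in x0 :: s0 by move=> y; rewrite -Hrot mem_rot.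
clear Hrot; case: s' Hu' Hc' Hs' Hmem => [//|a t] Hu' Hc' Hs' Hmem.
case: t Hu' Hc' Hs' Hmem => [//|c t] Hu' Hc' Hs' Hmem.
rewrite /= rcons_path in Hc'.
case/and4P: Hc' => Hxa _ _ Hbx.
set b := last c t in Hbx.
have Hb : b \in c :: t by rewrite /b mem_last.
have Hab : a != b.
  apply/negP => /eqP Hab; move: Hu' => /= /and3P [_ Hna _].
  by rewrite Hab Hb in Hna.
have Ha : rk a <= rk x by apply: Hmax; apply: Hmem; rewrite !inE eqxx orbT.
have Hb' : rk b <= rk x by apply: Hmax; apply: Hmem; rewrite in_cons; apply/orP; right; rewrite in_cons Hb orbT.
have Ea : a = par x.
  case: (Hr _ _ Hxa) => [[]//|[_ H]]; by rewrite leqNgt H in Ha.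
have Eb : b = par x.
  case: (Hr _ _ Hbx) => [[_ H]|[]//]; by rewrite leqNgt H in Hb'.
by rewrite Ea Eb eqxx in Hab.
Qed.

Lemma cross (T : finType) (e : rel T) (D : {set T}) (p : seq T) (y : T) :
  y \in D -> path e y p -> last y p \notin D ->
  exists a b, [/\ a \in D, b \notin D & e a b].
Proof.
elim: p y => [|z p IH] y Hy /=; first by rewrite Hy.
case/andP=> Hyz Hp Hl.
case Hz: (z \in D); first exact: (IH z Hz Hp Hl).
by exists y, z; rewrite Hz.
Qed.

Section TreePH.
Variables (T H : digraph).
Hypothesis Htree : oriented_tree T.
Variable f : T -> PH H.
Hypothesis Hf : forall u v, darc T u v -> darc (PH H) (f u) (f v).

Definition fs (x : T) : {set H} := val (f x).

Definition Inv (D : {set T}) (g : T -> H) :=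
  [/\ forall x, x \in D -> g x \in fs x,
      forall x y, x \in D -> y \in D -> darc T x y -> darc H (g x) (g y)
    & forall x y, x \in D -> y \in D ->
        exists p, [/\ path (uadj (G:=T)) x p, last x p = y & all (mem D) p]].

Lemma fs_nonempty x : exists h, h \in fs x.
Proof. by apply/set0Pn; exact: (valP (f x)). Qed.

Lemma inv_step n : n < #|T| -> exists (D : {set T}) (g : T -> H), #|D| = n.+1 /\ Inv D g.
Proof.
case: Htree => Hcard Hloop Hanti Hconn Hcyc.
elim: n => [_|n IH Hn].
  case/card_gt0P: Hcard => r _.
  case: (fs_nonempty r) => h Hh.
  exists [set r], (fun _ => h); split; first by rewrite cards1.
  split.
  - by move=> x; rewrite inE => /eqP ->.
  - by move=> x y; rewrite !inE => /eqP -> /eqP ->; rewrite (negbTE (Hloop r)).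
  - by move=> x y; rewrite !inE => /eqP -> /eqP ->; exists [::].
case: (IH (ltnW Hn)) => D [g [HD [Hmem Hhom Hpath]]].
have [x Hx] : exists x, x \notin D.
  case: (pickP (fun x => x \notin D)) => [x Hx|H0]; first by exists x.
  have : [set: T] \subset D by apply/subsetP => x _; move: (H0 x) => /= /negbFE.
  move/subset_leq_card; rewrite cardsT HD => Hle.
  by move: (leq_ltn_trans Hle Hn); rewrite ltnn.
have [y Hy] : exists y, y \in D by apply/card_gt0P; rewrite HD.
case/connectP: (Hconn y x) => p Hp Hlast.
have Hl : last y p \notin D by rewrite -Hlast.
have [d [u [Hd Hu Hdu]]] := cross Hy Hp Hl.
have Huniq : forall d', d' \in D -> uadj u d' -> d' = d.
  move=> d' Hd' Hud'; apply/eqP/negP => Hne.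
  case: (Hpath d d' Hd Hd') => q [Hq Hql Hqa].
  move: Hql; case: (shortenP Hq) => q' Hq' Huq' Hsub Hql.
  have Hq'D : forall z, z \in q' -> z \in D.
    by move=> z /Hsub Hz; move/allP: Hqa => /(_ z Hz).
  have Hne' : q' != [::].
    by apply/eqP => E; move: Hql; rewrite E /= => E'; rewrite E' eqxx in Hne.
  have := Hcyc (u :: d :: q').
  have -> : 3 <= size (u :: d :: q') by case: q' Hne' {Hq' Huq' Hsub Hql Hq'D}.
  have -> : uniq (u :: d :: q').
    rewrite cons_uniq Huq' andbT in_cons negb_or; apply/andP; split.
      by apply/negP => /eqP E; rewrite E Hd in Hu.
    by apply/negP => /Hq'D; rewrite (negbTE Hu).
  rewrite /= rcons_path Hq' Hql (uadj_sym u d) Hdu uadj_sym Hud'.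
  by move=> /(_ isT isT).
have [h [Hh1 Hh2 Hh3]] : exists h, [/\ h \in fs u,
     darc T d u -> darc H (g d) h & darc T u d -> darc H h (g d)].
  case Hdu' : (darc T d u).
    move: (Hf Hdu') => /andP [/forallP /(_ (g d)) /implyP /(_ (Hmem d Hd)) /existsP [h /andP [Hh1 Hh2]] _].
    exists h; split => // Hud; by rewrite (negbTE (Hanti _ _ Hdu')) in Hud.
  have Hud : darc T u d by move: Hdu; rewrite /uadj Hdu'.
  move: (Hf Hud) => /andP [_ /forallP /(_ (g d)) /implyP /(_ (Hmem d Hd)) /existsP [h /andP [Hh1 Hh2]]].
  by exists h; split.
exists (u |: D), (fun z => if z == u then h else g z); split.
  by rewrite cardsU1 Hu HD.
split.
- move=> z; rewrite in_setU1; case: eqP => [->|_] //= /Hmem //.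
- move=> z w; rewrite !in_setU1.
  case: (eqVneq z u) => [->|Hzu]; case: (eqVneq w u) => [->|Hwu] //=.
  + by rewrite (negbTE (Hloop u)).
  + move=> _ Hw Huw; have Ew := Huniq w Hw (introT orP (or_introl Huw)).
    by rewrite Ew in Huw *; apply: Hh3.
  + move=> Hz _ Hzu'; have Ez := Huniq z Hz (introT orP (or_intror Hzu')).
    by rewrite Ez in Hzu' *; apply: Hh2.
  + by apply: Hhom.
- move=> z w; rewrite !in_setU1.
  have sub : forall q, all (mem D) q -> all (mem (u |: D)) q.
    by move=> q /allP Hq; apply/allP => t /Hq; rewrite /= in_setU1 => ->; rewrite orbT.
  case: (eqVneq z u) => [->|Hzu]; case: (eqVneq w u) => [->|Hwu] //=.
  + by move=> _ _; exists [::].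
  + move=> _ Hw; case: (Hpath d w Hd Hw) => q [Hq Hql Hqa].
    exists (d :: q); split => //=; first by rewrite uadj_sym Hdu.
    by rewrite in_setU1 Hd orbT sub.
  + move=> Hz _; case: (Hpath z d Hz Hd) => q [Hq Hql Hqa].
    exists (rcons q u); split.
    * by rewrite rcons_path Hq Hql Hdu.
    * by rewrite last_rcons.
    * by rewrite all_rcons /= in_setU1 eqxx sub.
  + move=> Hz Hw; case: (Hpath z w Hz Hw) => q [Hq Hql Hqa].
    by exists q; split => //; apply: sub.
Qed.

Lemma tree_PH : hom T H.
Proof.
case: (Htree) => Hcard _ _ _ _.
have Hn : #|T|.-1 < #|T| by rewrite (prednK Hcard).
case: (inv_step Hn) => D [g [HD [_ Hhom _]]].
have HDT : forall x, x \in D.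
  have : D == [set: T] by rewrite eqEcard subsetT cardsT HD (prednK Hcard) leqnn.
  by move/eqP => -> x; rewrite inE.
by exists g => u v; apply: Hhom.
Qed.
End TreePH.

Section Arc.
Variable H : digraph.
Variable phi : PH H -> H.
Hypothesis Hphi : forall X Y, darc (PH H) X Y -> darc H (phi X) (phi Y).

Definition tl (X : PH (arc_graph H)) : {set H} := [set (val a).1 | a in val X].
Definition hd (X : PH (arc_graph H)) : {set H} := [set (val a).2 | a in val X].

Lemma tl_ne X : tl X != set0.
Proof.
case/set0Pn: (valP X) => a Ha; apply/set0Pn; exists (val a).1.
by apply/imsetP; exists a.
Qed.
Lemma hd_ne X : hd X != set0.
Proof.
case/set0Pn: (valP X) => a Ha; apply/set0Pn; exists (val a).2.
by apply/imsetP; exists a.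
Qed.

Definition tlP X : PH H := exist _ (tl X) (tl_ne X).
Definition hdP X : PH H := exist _ (hd X) (hd_ne X).

Lemma tl_hd X : darc (PH H) (tlP X) (hdP X).
Proof.
apply/andP; split; apply/forallP => z; apply/implyP => /imsetP [a Ha ->];
  apply/existsP.
- exists (val a).2; apply/andP; split; last exact: (valP a).
  by apply/imsetP; exists a.
- exists (val a).1; apply/andP; split; last exact: (valP a).
  by apply/imsetP; exists a.
Qed.

Definition psi (X : PH (arc_graph H)) : arc_graph H :=
  exist (fun p : H * H => darc H p.1 p.2) (phi (tlP X), phi (hdP X)) (Hphi (tl_hd X)).

Lemma psi_hom X Y : darc (PH (arc_graph H)) X Y -> darc (arc_graph H) (psi X) (psi Y).
Proof.
case/andP => /forallP H1 /forallP H2.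
rewrite /= -/(hdP X).
suff -> : hdP X = tlP Y by [].
apply: val_inj; apply/setP => z; rewrite /= /hd /tl; apply/imsetP/imsetP.
- case=> a Ha ->; move/implyP: (H1 a) => /(_ Ha) /existsP [b /andP [Hb /eqP E]].
  by exists b.
- case=> b Hb ->; move/implyP: (H2 b) => /(_ Hb) /existsP [a /andP [Ha /eqP E]].
  by exists a.
Qed.
End Arc.

Lemma arc_PH (H : digraph) : hom (PH H) H -> hom (PH (arc_graph H)) (arc_graph H).
Proof. case=> phi Hphi; exists (psi Hphi); exact: psi_hom. Qed.

Fixpoint allseq (T : finType) (n : nat) : seq (seq T) :=
  if n is n'.+1 then [::] :: [seq x :: s | x <- enum T, s <- allseq T n']
  else [:: [::]].
Arguments allseq : clear implicits.

Lemma mem_allseq (T : finType) n (s : seq T) : (s \in allseq T n) = (size s <= n).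
Proof.
elim: n s => [|n IH] [|x s] //=.
rewrite in_cons /=; apply/allpairsP; case: ifP.
  by rewrite ltnS -IH => Hs; exists (x, s); rewrite mem_enum.
by rewrite ltnS -IH => Hs [[a b] /= [_ Hb [_ E]]]; rewrite E Hb in Hs.
Qed.

Section Unfold.
Variable G : digraph.
Definition stp := (bool * G)%type.

Definition endp (v : G) (s : seq stp) : G := if s is (b, y) :: _ then y else v.

Definition scond (b : bool) (x y : G) := if b then darc G x y else darc G y x.

Fixpoint valid (v : G) (s : seq stp) : bool :=
  if s is (b, y) :: s' then valid v s' && scond b (endp v s') y else true.

Definition wl n v := [seq s <- allseq (bool * G)%type n | valid v s].

Lemma mem_wl n v s : (s \in wl n v) = valid v s && (size s <= n).
Proof. by rewrite mem_filter mem_allseq. Qed.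

Definition uarc (x y : seq stp) : bool :=
  (if y is (b, _) :: y' then b && (y' == x) else false) ||
  (if x is (b, _) :: x' then ~~ b && (x' == y) else false).

Definition U n v : digraph :=
  @Digraph (seq_sub (wl n v)) (fun x y => uarc (ssval x) (ssval y)).

Lemma root_in n v : [::] \in wl n v.
Proof. by rewrite mem_wl. Qed.

Definition rootU n v : U n v := SeqSub (root_in n v).

Lemma U_hom n v : hom (U n v) G.
Proof.
exists (fun x => endp v (ssval x)) => [[x Hx] [y Hy]] /=.
rewrite mem_wl in Hx; rewrite mem_wl in Hy.
case/andP: Hx => Hx _; case/andP: Hy => Hy _.
rewrite /uarc; case/orP.
- case: y Hy => [//|[b z] y'] /= /andP [_ Hc] /andP [Hb /eqP E].
  by rewrite Hb E in Hc.
- case: x Hx => [//|[b z] x'] /= /andP [_ Hc] /andP [Hb /eqP E].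
  by rewrite (negbTE Hb) E in Hc.
Qed.

Lemma uarc_size x y : uarc x y ->
  (size y = (size x).+1) \/ (size x = (size y).+1).
Proof.
rewrite /uarc; case/orP.
- by case: y => [//|[b z] y'] /andP [_ /eqP <-]; left.
- by case: x => [//|[b z] x'] /andP [_ /eqP <-]; right.
Qed.

Lemma uarc_par x y : uarc x y ->
  (x = behead y /\ size x < size y) \/ (y = behead x /\ size y < size x).
Proof.
rewrite /uarc; case/orP.
- by case: y => [//|[b z] y'] /andP [_ /eqP <-]; left.
- by case: x => [//|[b z] x'] /andP [_ /eqP <-]; right.
Qed.

Lemma beh_in n v s : s \in wl n v -> behead s \in wl n v.
Proof.
rewrite !mem_wl; case: s => [//|[b z] s] /= /andP [/andP [H1 _] H2].
by rewrite H1 ltnW.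
Qed.

Definition parU n v (x : U n v) : U n v := SeqSub (beh_in (ssvalP x)).

Lemma nSSn m : m = m.+2 -> False.
Proof. by move=> /eqP; rewrite eqn_leq ltnNge leqnSn andbF. Qed.

Lemma uarc_anti x y : uarc x y -> ~~ uarc y x.
Proof.
have F : forall (p q : seq stp) a d, p == a :: q -> q == d :: p -> False.
  by move=> p q a d /eqP -> /eqP /(f_equal size) /= /nSSn.
rewrite /uarc; case: x => [|[b z] x]; case: y => [|[c t] y] //=.
- by case: c.
- by case: b.
- case: b; case: c => //=; rewrite ?orbF ?andbF //.
  + by move=> H1; apply/negP => H2; apply: F H1 H2.
  + by move=> H1; apply/negP => H2; apply: F H1 H2.
Qed.

Lemma U_tree n v : oriented_tree (U n v).
Proof.
split.
- by apply/card_gt0P; exists (rootU n v).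
- move=> [x Hx] /=; apply/negP => /uarc_size [] E; exact: (n_Sn _ E).
- by move=> [x Hx] [y Hy] /=; apply: uarc_anti.
- have Hsym := uadj_sym (T := U n v).
  have Hr : forall x : U n v, connect (uadj (G:=U n v)) x (rootU n v).
    move=> [x Hx]; elim: x Hx => [|[b z] x IH] Hx.
      by have -> : SeqSub Hx = rootU n v by apply: val_inj.
    apply: connect_trans (IH (beh_in Hx)).
    apply: connect1; rewrite /uadj /= /uarc /=; case: b {Hx} => /=.
    * by rewrite eqxx orbT.
    * by rewrite eqxx orbT.
  move=> x y; apply: connect_trans (Hr x) _.
  by rewrite (sym_connect_sym Hsym) Hr.
- apply: (@acyc (U n v) (fun x : U n v => size (ssval x)) (@parU n v)) => x y.
  rewrite /uadj => /orP [] /uarc_par [[E Hs]|[E Hs]].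
  + by right; split => //; apply: val_inj.
  + by left; split => //; apply: val_inj.
  + by left; split => //; apply: val_inj.
  + by right; split => //; apply: val_inj.
Qed.

Lemma incl_in m n v s : m <= n -> s \in wl m v -> s \in wl n v.
Proof. by move=> Hmn; rewrite !mem_wl => /andP [-> H]; apply: leq_trans H Hmn. Qed.

Lemma valid_app b v0 w0 s : scond b v0 w0 ->
  valid v0 (s ++ [:: (b, w0)]) = valid w0 s /\ endp v0 (s ++ [:: (b, w0)]) = endp w0 s.
Proof.
move=> Hc; elim: s => [|[c z] s [IH1 IH2]] /=; first by rewrite Hc.
by rewrite IH1 IH2.
Qed.

Lemma emb_in b v0 w0 n s : scond b v0 w0 -> s \in wl n w0 ->
  s ++ [:: (b, w0)] \in wl n.+1 v0.
Proof.
move=> Hc; rewrite !mem_wl => /andP [H1 H2].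
by rewrite (valid_app s Hc).1 H1 size_cat addn1 ltnS.
Qed.

Lemma uarc_app x y t : uarc x y -> uarc (x ++ t) (y ++ t).
Proof.
rewrite /uarc; case/orP.
- by case: y => [//|[b z] y'] /andP [Hb /eqP <-] /=; rewrite Hb eqxx.
- by case: x => [//|[b z] x'] /andP [Hb /eqP <-] /=; rewrite Hb eqxx orbT.
Qed.
End Unfold.

Definition pb (P : Prop) : bool := if excluded_middle_informative P then true else false.
Lemma pbE (P : Prop) : pb P <-> P.
Proof. by rewrite /pb; case: excluded_middle_informative. Qed.

Lemma finmax (K : finType) (Q : K -> nat -> Prop) :
  (forall k n m, n <= m -> Q k n -> Q k m) -> (forall k, exists n, Q k n) ->
  exists N, forall k, Q k N.
Proof.
move=> Hm Hex.
suff [N HN] : exists N, forall k, k \in enum K -> Q k N.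
  by exists N => k; apply: HN; rewrite mem_enum.
elim: (enum K) => [|a l [N HN]]; first by exists 0.
case: (Hex a) => n Hn; exists (maxn n N) => k; rewrite in_cons.
case/orP => [/eqP ->|Hk]; first by apply: Hm Hn; rewrite leq_maxl.
by apply: Hm (HN k Hk); rewrite leq_maxr.
Qed.

Section F.
Variables G K : digraph.
Hypothesis HPK : hom (PH K) K.
Hypothesis Htrees : forall T : digraph, oriented_tree T -> hom T G -> hom T K.

Definition Sn n (v : G) (k : K) : Prop :=
  exists phi : U n v -> K, (forall x y, darc (U n v) x y -> darc K (phi x) (phi y))
     /\ phi (rootU n v) = k.

Lemma Sn_anti m n v k : m <= n -> Sn n v k -> Sn m v k.
Proof.
move=> Hmn [phi [Hphi Hr]].
exists (fun x : U m v => phi (SeqSub (incl_in Hmn (ssvalP x)))); split.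
  by move=> x y Hxy; apply: Hphi.
by rewrite -Hr; congr phi; apply: val_inj.
Qed.

Definition Sv (v : G) : {set K} := [set k | pb (forall n, Sn n v k)].

Lemma Sv_ne v : Sv v != set0.
Proof.
apply/set0Pn; apply: NNPP => Hno.
have Hex : forall k, exists n, ~ Sn n v k.
  move=> k; apply: not_all_ex_not => Hall; apply: Hno; exists k.
  by rewrite inE; apply/pbE.
have [N HN] := finmax (fun k n m Hnm H1 H2 => H1 (Sn_anti Hnm H2)) Hex.
case: (Htrees (U_tree N v) (U_hom N v)) => phi Hphi.
by apply: (HN (phi (rootU N v))); exists phi.
Qed.

Definition fS (v : G) : PH K := exist _ (Sv v) (Sv_ne v).

Lemma emb_Sn b v0 w0 N k : scond b v0 w0 -> Sn N.+1 v0 k ->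
  exists k', Sn N w0 k' /\ (if b then darc K k k' else darc K k' k).
Proof.
move=> Hc [phi [Hphi Hr]].
pose psi := fun x : U N w0 => phi (SeqSub (emb_in Hc (ssvalP x))).
exists (psi (rootU N w0)); split.
  exists psi; split => // x y Hxy; apply: Hphi; exact: uarc_app.
rewrite -Hr /psi; move: (emb_in Hc (ssvalP (rootU N w0))).
clear psi; case: b Hc => Hc Hin; apply: Hphi; rewrite /= /uarc /=.
  by [].
by [].
Qed.

Lemma fS_hom v w : darc G v w -> darc (PH K) (fS v) (fS w).
Proof.
move=> Hvw; apply/andP; split; apply/forallP => k; apply/implyP;
  rewrite /= inE => /pbE Hk; apply/existsP; apply: NNPP => Hno.
- have Hex : forall k', exists n, darc K k k' -> ~ Sn n w k'.
    move=> k'; case Ha: (darc K k k'); last by exists 0.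
    have : ~ (forall n, Sn n w k').
      by move=> Hall; apply: Hno; exists k'; rewrite Ha andbT inE; apply/pbE.
    by case/not_all_ex_not => n Hn; exists n.
  have [N HN] := finmax (fun k' n m Hnm H1 H2 H3 => H1 H2 (Sn_anti Hnm H3)) Hex.
  have Hc : scond true v w by [].
  case: (emb_Sn Hc (Hk N.+1)) => k' [H1 H2].
  exact: HN H2 H1.
- have Hex : forall k', exists n, darc K k' k -> ~ Sn n v k'.
    move=> k'; case Ha: (darc K k' k); last by exists 0.
    have : ~ (forall n, Sn n v k').
      by move=> Hall; apply: Hno; exists k'; rewrite Ha andbT inE; apply/pbE.
    by case/not_all_ex_not => n Hn; exists n.
  have [N HN] := finmax (fun k' n m Hnm H1 H2 H3 => H1 H2 (Sn_anti Hnm H3)) Hex.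
  have Hc : scond false w v by [].
  case: (emb_Sn Hc (Hk N.+1)) => k' [H1 H2].
  exact: HN H2 H1.
Qed.

Lemma G_hom_K : hom G K.
Proof.
case: HPK => g Hg; exists (fun v => g (fS v)) => u v Huv.
by apply: Hg; apply: fS_hom.
Qed.
End F.

Lemma pk_td (K : digraph) : hom (PH K) K -> tree_duality K.
Proof.
move=> HPK; exists (fun F => oriented_tree F /\ ~ hom F K); split; first by move=> F [].
move=> G; split.
  move=> [g Hg] [F [[_ HF] [h Hh]]]; apply: HF.
  by exists (fun x => g (h x)) => u v Huv; apply: Hg; apply: Hh.
move=> Hno; apply: G_hom_K => // T HT HTG; apply: NNPP => HTK.
by apply: Hno; exists T.
Qed.

Lemma td_PH (H : digraph) : tree_duality H -> hom (PH H) H.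
Proof.
case=> Fs [HFs Hc]; apply/(Hc (PH H)) => [[F [HF [f Hf]]]].
have HFH : hom F H := tree_PH (HFs F HF) Hf.
move/(Hc F): HFH; apply; exists F; split => //.
by exists id.
Qed.

Theorem corollary2p4 (H : digraph) :
  tree_duality H -> tree_duality (arc_graph H).
Proof. by move=> /td_PH /arc_PH /pk_td. Qed.
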